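(* In the search model described in the context, if $pv>c(0)$, then it is optimal for the agent to engage in search, i.e., no strategy with $L_t=\emptyset$ for all $t$ is optimal (some strategy searching a set of positive measure yields strictly higher payoff than never searching).
   Context: A single agent searches for an innovation among research projects $J=[0,1)$. In each period $t=1,2,\ldots$ the agent may examine an arbitrary Lebesgue-measurable set $S\subseteq J$ at cost $C(S)=\int_S c(j)\,dj$, where $c:[0,1)\to\mathbb{R}$ is continuous, strictly increasing, and satisfies $\lim_{j\to 1}c(j)=\infty$. With probability $p\in(0,1)$ the innovation is feasible, in which case there is a single successful project $\hat j\in J$, distributed uniformly on $J$; examining $\hat j$ yields a success of value $v>0$, examining any other project yields nothing. With probability $1-p$ no project is successful. Payoffs and costs are discounted by $\delta\in(0,1)$ per period. A search strategy is a sequence $\sigma=(L_1,L_2,\ldots)$ of (possibly empty) measurable subsets of $[0,1)$, where $L_t$ is the set examined in period $t$ if no success occurred in periods $1,\ldots,t-1$; search ends once a success occurs. Let $S_t=\bigcup_{t'<t}L_{t'}$. The agent's payoff from $\sigma$ is $\mathbb{E}\big[\sum_{t\ge1}\delta^{t-1}\big(v\cdot\mathbf{1}\{\text{success in period } t\}-C(L_t)\cdot\mathbf{1}\{\text{no success before period } t\}\big)\big]$, where success in period $t$ means $\hat j$ exists, $\hat j\in L_t$ and $\hat j\notin S_t$. Never searching yields payoff zero. *)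

(* Defs.v *)
From HB Require Import structures.
From mathcomp Require Import all_boot all_order all_algebra.
From mathcomp Require Import all_classical all_reals all_analysis.
Set Implicit Arguments. Unset Strict Implicit. Unset Printing Implicit Defensive.
Import Order.TTheory GRing.Theory Num.Theory.
Import numFieldNormedType.Exports.
Local Open Scope classical_set_scope.
Local Open Scope ring_scope.

Section SearchModel.
Variable R : realType.

Definition projects : set R := `[0, 1[.

(* Lebesgue measure of a set, as a real number (all sets used are subsets
   of [0,1), hence of finite measure). *)
Definition leb (A : set R) : R := fine ((@lebesgue_measure R) A).

(* A search strategy: L t is the set examined in period t+1
   (periods are indexed from 0 here, so period t+1 in the paper is t). *)
Definition strategy := nat -> set R.

Definition searched (L : strategy) (t : nat) : set R :=
  [set x | exists2 k, (k < t)%N & L k x].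

Definition cost (c : R -> R) (S : set R) : R :=
  Rintegral (@lebesgue_measure R) S c.

Definition admissible (c : R -> R) (L : strategy) : Prop :=
  forall t, measurable (L t) /\ L t `<=` projects /\
            (@lebesgue_measure R).-integrable (L t) (EFin \o c).

(* Expected (undiscounted) payoff of period t:
   v * P(success in period t) - C(L_t) * P(no success before period t), where
   P(success in t) = p * |L_t \ S_t| and
   P(no success before t) = p * |J \ S_t| + (1 - p). *)
Definition period_payoff (p v : R) (c : R -> R) (L : strategy) (t : nat) : R :=
  v * (p * leb (L t `\` searched L t))
  - cost c (L t) * (p * leb (projects `\` searched L t) + (1 - p)).

(* Discounted period payoffs delta^(t-1) * (...) (with the 0-based index). *)
Definition disc_payoff (p v delta : R) (c : R -> R) (L : strategy) (t : nat) : R :=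
  delta ^+ t * period_payoff p v c L t.

Definition payoff (p v delta : R) (c : R -> R) (L : strategy) : R :=
  limn (series (disc_payoff p v delta c L)).

Definition never_search : strategy := fun _ => set0.

End SearchModel.

(* Main.v *)
Require Import Defs.
From HB Require Import structures.
From mathcomp Require Import all_boot all_order all_algebra.
From mathcomp Require Import all_classical all_reals all_analysis.
Import Order.TTheory GRing.Theory Num.Theory.
Import numFieldNormedType.Exports.
Local Open Scope classical_set_scope.
Local Open Scope ring_scope.

Lemma leb0 (R : realType) : leb (@set0 R) = 0.
Proof. by rewrite /leb measure0. Qed.

Lemma disc0 (R : realType) (c : R -> R) p v delta (L : strategy R) t :
  L t = set0 -> disc_payoff p v delta c L t = 0.
Proof.
move=> Lt; rewrite /disc_payoff /period_payoff Lt set0D leb0 /cost Rintegral_set0.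
by rewrite !mulr0 mul0r subr0 mulr0.
Qed.

Lemma series_first (R : realType) (u : nat -> R) :
  (forall t, u t.+1 = 0) -> forall n, series u n.+1 = u 0%N.
Proof.
move=> u0 n; rewrite /series /= big_nat_recl // big1 ?addr0 // => i _; exact: u0.
Qed.
Theorem lemma1 (R : realType) (c : R -> R) (p v delta : R) :
  {within `[0, 1[, continuous c} ->
  (forall x y : R, 0 <= x -> x < y -> y < 1 -> c x < c y) ->
  c x @[x --> 1^'-] --> +oo ->
  0 < p < 1 -> 0 < v -> 0 < delta < 1 ->
  c 0 < p * v ->
  payoff p v delta c (@never_search R) = 0 /\
  exists L : strategy R,
    admissible c L /\
    (exists t, 0 < leb (L t)) /\
    cvgn (series (disc_payoff p v delta c L)) /\
    payoff p v delta c (@never_search R) < payoff p v delta c L.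
Proof.
move=> cc cinc _ /andP[p0 p1] v0 _ c0.
have P0 : payoff p v delta c (@never_search R) = 0.
  rewrite /payoff.
  have -> : series (disc_payoff p v delta c (@never_search R)) = fun=> 0.
    apply/funext => n; rewrite /series /= big1 // => i _; exact: disc0.
  exact: lim_cst.
split; first exact: P0.
have ch : {within `[0, 2^-1], continuous c}.
  apply: continuous_subspaceW cc; apply: subset_itvl; rewrite bnd_simp.
  by rewrite invf_lt1 // ltr1n.
have h0 : (0:R) < 2^-1 by rewrite invr_gt0 ltr0n.
have [_ cr _] := (continuous_within_itvP c h0).1 ch.
have [a [a0 a1 ca]] : exists a, [/\ 0 < a, a < 2^-1 & c a < p * v].
  have H : \forall t \near 0^'+, c t < p * v := cvgr_lt _ cr _ c0.
  near (0:R)^'+ => a.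
  exists a; split; near: a.
  - exact: nbhs_right_gt.
  - exact: nbhs_right_lt.
  - exact: H.
  Unshelve. all: end_near.

have a1' : a < 1 by rewrite (lt_trans a1) // invf_lt1 // ltr1n.
pose I : set R := [set` `[0, a[].
have mI : measurable I by exact: measurable_itv.
have intS : forall f : R -> R, {within [set` `[0, a]], continuous f} ->
    (@lebesgue_measure R).-integrable I (EFin \o f).
  move=> f cf.
  have := continuous_compact_integrable (@segment_compact _ 0 a) cf.
  apply: integrableS => //; try exact: measurable_itv.
  by apply: subset_itvl; rewrite bnd_simp.
have intI : (@lebesgue_measure R).-integrable I (EFin \o c).
  apply: intS; apply: continuous_subspaceW cc; apply: subset_itvl; rewrite bnd_simp //.
have lebI : leb I = a.
  by rewrite /leb /I lebesgue_measure_itv /= lte_fin a0 /= subr0.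
have leb1 : leb (projects (R:=R)) = 1.
  by rewrite /leb /projects lebesgue_measure_itv /= lte_fin ltr01 /= subr0.
have costI : cost c I < p * v * a.
  apply: (le_lt_trans (y := c a * a)).
    have -> : c a * a = Rintegral (@lebesgue_measure R) I (fun=> c a) by rewrite Rintegral_cst // -/(leb I) lebI.
    rewrite /cost.
    apply: le_Rintegral => //.
      apply: intS; apply: continuous_subspaceT => x; exact: cst_continuous.
    move=> x; rewrite /I /= in_itv /= => /andP[x0 xa].
    by apply: ltW; apply: cinc.
  by rewrite ltr_pM2r.
pose L : strategy R := fun t => if t is 0%N then I else set0.
have sL0 : searched L 0 = set0.
  by apply/seteqP; split => x // [].
have d0 : disc_payoff p v delta c L 0 = v * p * a - cost c I.
  rewrite /disc_payoff /period_payoff expr0 mul1r sL0 !setD0 /= lebI leb1.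
  have -> : p * 1 + (1 - p) = 1 by rewrite mulr1 addrCA subrr addr0.
  by rewrite mulr1 mulrA.
have dS : forall t, disc_payoff p v delta c L t.+1 = 0 by move=> t; exact: disc0.
have cv : series (disc_payoff p v delta c L) @ \oo --> v * p * a - cost c I.
  apply: cvg_near_cst; exists 1%N => // n /= n1.
  by case: n n1 => // n _; rewrite series_first // d0.
exists L; split.
  case=> [|t] /=; last by split => //; split => //; exact: integrable_set0.
  split => //; split => //; apply: subset_itvl; rewrite bnd_simp; exact: ltW.
split; first by exists 0%N; rewrite /= lebI.
split; first by apply/cvg_ex; eexists; exact: cv.
rewrite P0 /payoff (cvg_lim _ cv) // subr_gt0.
by rewrite (mulrC v).
Qed.
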